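(* For all integers $n\ge 3$ and $k\ge 1$, $\mathrm{mur}(kC_n)=kn-2k-1$, where $kC_n$ is the vertex-disjoint union of $k$ copies of the cycle $C_n$ on $n$ vertices.
   Context: For a finite simple undirected graph $G$ on vertices $v_1,\dots,v_n$, let $A_G$ be its $(0,1)$-adjacency matrix, $D_G=\mathrm{diag}(d_1,\dots,d_n)$ with $d_i$ the degree of $v_i$, $I$ the $n\times n$ identity matrix and $J$ the $n\times n$ all-ones matrix. A universal adjacency matrix of $G$ is any matrix $\alpha A_G+\beta I+\gamma J+\delta D_G$ with real scalars $\alpha,\beta,\gamma,\delta$ and $\alpha\neq 0$. The minimum universal rank $\mathrm{mur}(G)$ is the minimum rank over all universal adjacency matrices of $G$. *)

(* Defs.v *)
From mathcomp Require Import all_boot all_order all_algebra.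
From mathcomp Require Import reals.
Set Implicit Arguments. Unset Strict Implicit. Unset Printing Implicit Defensive.
Import Order.TTheory GRing.Theory Num.Theory.
Local Open Scope ring_scope.

(* A finite simple graph on vertex set 'I_N is given by a symmetric,
   irreflexive boolean relation e. *)

Definition adj_mx (R : realType) (N : nat) (e : rel 'I_N) : 'M[R]_N :=
  \matrix_(i, j) (e i j)%:R.

Definition deg (N : nat) (e : rel 'I_N) (i : 'I_N) : nat := #|[set j | e i j]|.

Definition deg_mx (R : realType) (N : nat) (e : rel 'I_N) : 'M[R]_N :=
  \matrix_(i, j) ((i == j)%:R * (deg e i)%:R).

Definition univ_adj_mx (R : realType) (N : nat) (e : rel 'I_N)
    (a b c d : R) : 'M[R]_N :=
  a *: adj_mx R e + b%:M + c *: const_mx 1 + d *: deg_mx R e.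

Definition mur_is (R : realType) (N : nat) (e : rel 'I_N) (r : nat) : Prop :=
  (exists a b c d : R, a != 0 /\ \rank (univ_adj_mx e a b c d) = r) /\
  (forall a b c d : R, a != 0 -> (r <= \rank (univ_adj_mx e a b c d))%N).

(* k C_n : vertex v of 'I_(k*n) lies in copy v %/ n at position v %% n;
   two vertices are adjacent iff they lie in the same copy and their
   positions differ by 1 modulo n. *)
Definition kCn_rel (k n : nat) : rel 'I_(k * n) :=
  fun u v => ((u %/ n == v %/ n) &&
              (((u %% n).+1 %% n == v %% n) || ((v %% n).+1 %% n == u %% n)))%N.

(* Main.v *)
Require Import Defs.
From mathcomp Require Import all_boot all_order all_algebra.
From mathcomp Require Import reals.
From mathcomp Require Import trigo.
From mathcomp Require Import zify ring lra.
Set Implicit Arguments. Unset Strict Implicit. Unset Printing Implicit Defensive.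
Lemma divmodE (n q r : nat) : (r < n)%N -> ((q*n + r) %/ n = q /\ (q*n+r) %% n = r)%N.
Proof.
move=> hr; have n0 : (0 < n)%N by apply: leq_ltn_trans hr.
by rewrite divnMDl // divn_small // addn0 modnMDl modn_small.
Qed.

Lemma eq_qr (n m q x : nat) : (x < n)%N ->
  (m == q * n + x) = (m %/ n == q) && (m %% n == x).
Proof.
move=> hx; apply/eqP/andP.
  by move=> ->; have [-> ->] := divmodE q hx.
by case=> /eqP <- /eqP <-; rewrite -divn_eq.
Qed.

Lemma key_mod n s r : (0 < n)%N -> (s < n)%N -> (r < n)%N ->
  ((s.+1 %% n == r) = (s == (r + n.-1) %% n))%N.
Proof.
move=> n0 hs hr.
rewrite -{1}(modn_small hs) -{1}(modn_small hr).
rewrite -(eqn_modDr n.-1) addSn -addnS prednK // modnDr.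
by rewrite modn_mod (modn_small hs).
Qed.

Lemma qr_lt k n q x : (q < k)%N -> (x < n)%N -> (q * n + x < k * n)%N.
Proof. move=> hq hx; nia. Qed.

Definition nxt (n j : nat) := ((j %/ n) * n + (j %% n).+1 %% n)%N.
Definition prv (n j : nat) := ((j %/ n) * n + (j %% n + n.-1) %% n)%N.

Lemma div_lt k n (j : 'I_(k*n)) : (0 < n)%N -> (j %/ n < k)%N.
Proof. by move=> n0; rewrite ltn_divLR. Qed.

Lemma nxt_lt k n (j : 'I_(k*n)) : (0 < n)%N -> (nxt n j < k*n)%N.
Proof. by move=> n0; apply: qr_lt; [exact: div_lt | by rewrite ltn_mod]. Qed.
Lemma prv_lt k n (j : 'I_(k*n)) : (0 < n)%N -> (prv n j < k*n)%N.
Proof. by move=> n0; apply: qr_lt; [exact: div_lt | by rewrite ltn_mod]. Qed.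

Lemma nxt_div n j : (0 < n)%N -> (nxt n j %/ n = j %/ n /\ nxt n j %% n = (j %% n).+1 %% n)%N.
Proof. by move=> n0; apply: divmodE; rewrite ltn_mod. Qed.
Lemma prv_div n j : (0 < n)%N -> (prv n j %/ n = j %/ n /\ prv n j %% n = (j %% n + n.-1) %% n)%N.
Proof. by move=> n0; apply: divmodE; rewrite ltn_mod. Qed.

Lemma kCn_nb k n (i j : 'I_(k*n)) : (0 < n)%N ->
  kCn_rel i j = (val i == nxt n j) || (val i == prv n j).
Proof.
move=> n0; rewrite /kCn_rel /nxt /prv !eq_qr ?ltn_mod //.
rewrite key_mod ?ltn_mod // [((j %% n).+1 %% n == _)%N]eq_sym andb_orr orbC.
by [].
Qed.

Lemma kCn_sym k n (i j : 'I_(k*n)) : kCn_rel i j = kCn_rel j i.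
Proof. by rewrite /kCn_rel eq_sym orbC. Qed.

Lemma nxt_prv n j : (3 <= n)%N -> (nxt n j == prv n j) = false.
Proof.
move=> n3; rewrite /nxt /prv eqn_add2l.
have -> : ((j %% n) + n.-1 = (n - 2) + (j %% n).+1)%N by lia.
rewrite -{1}(add0n (j %% n).+1) eqn_modDr mod0n modn_small; lia.
Qed.
Import Order.TTheory GRing.Theory Num.Theory.
Local Open Scope ring_scope.
Definition th (R : realType) (n : nat) : R := pi *+ 2 / n%:R.

Lemma nth_eq (R : realType) n : (0 < n)%N -> n%:R * th R n = pi *+ 2.
Proof. by move=> n0; rewrite /th mulrC divfK // pnatr_eq0 -lt0n. Qed.

Lemma per_iter (R : realType) (f : R -> R) (T : R) : periodic f T ->
  forall q x, f (x + T *+ q) = f x.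
Proof.
move=> hf; elim=> [|q IH] x; first by rewrite mulr0n addr0.
by rewrite mulrSr addrA hf IH.
Qed.

Lemma per_mod (R : realType) (f : R -> R) (hf : periodic f (pi *+ 2)) n m :
  (0 < n)%N -> f ((m %% n)%:R * th R n) = f (m%:R * th R n).
Proof.
move=> n0; rewrite {2}(divn_eq m n) natrD natrM mulrDl -mulrA nth_eq //.
by rewrite addrC [_%:R * (pi *+ 2)]mulr_natl per_iter.
Qed.

Lemma nb_gen (R : realType) (f : R -> R) (hf : periodic f (pi *+ 2))
  (hadd : forall x y, f (x + y) + f (x - y) = 2 * cos y * f x) n j :
  (0 < n)%N ->
  f ((nxt n j %% n)%:R * th R n) + f ((prv n j %% n)%:R * th R n)
  = 2 * cos (th R n) * f ((j %% n)%:R * th R n).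
Proof.
move=> n0; have [_ ->] := nxt_div j n0; have [_ ->] := prv_div j n0.
rewrite (per_mod hf (j %% n).+1) // (per_mod hf (j %% n + n.-1)) // -hadd.
congr (_ + _).
  by congr f; rewrite -natr1 mulrDl mul1r.
case: n n0 => // n' _ /=.
have h : n'%:R * th R n'.+1 = pi *+ 2 - th R n'.+1.
  by rewrite -(nth_eq R (isT : (0 < n'.+1)%N)) -natr1 mulrDl mul1r addrK.
rewrite natrD mulrDl h -[in RHS]hf; congr f; ring.
Qed.

Lemma cos_add2 (R : realType) (x y : R) : cos (x + y) + cos (x - y) = 2 * cos y * cos x.
Proof. by rewrite cosD cosB; ring. Qed.
Lemma sin_add2 (R : realType) (x y : R) : sin (x + y) + sin (x - y) = 2 * cos y * sin x.
Proof. by rewrite sinD sinB; ring. Qed.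

Lemma th_sin (R : realType) n : (3 <= n)%N -> 0 < sin (th R n).
Proof.
move=> n3; apply: sin_gt0_pi; apply/andP; split.
  rewrite /th divr_gt0 // ?ltr0n; last lia.
  by rewrite mulr2n addr_gt0 // pi_gt0.
rewrite /th ltr_pdivrMr ?ltr0n; last lia.
by rewrite -[pi *+ 2]mulr_natr ltr_pM2l ?pi_gt0 // ltr_nat.
Qed.

Lemma th_cos (R : realType) n : (3 <= n)%N -> cos (th R n) != 1.
Proof.
move=> n3; apply/eqP=> hc; have := sin2cos2 (th R n); rewrite hc expr1n subrr.
by move/eqP; rewrite sqrf_eq0 (gt_eqF (th_sin R n3)).
Qed.
Lemma sum_delta_ord (R : realType) N (F : 'I_N -> R) x :
  \sum_i F i * (i == x)%:R = F x.
Proof.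
rewrite (bigD1 x) //= eqxx mulr1 big1 ?addr0 // => i /negbTE ->.
by rewrite mulr0.
Qed.

Lemma sum_delta_nat (R : realType) N (F : 'I_N -> R) a (ha : (a < N)%N) :
  \sum_i F i * (val i == a)%:R = F (Ordinal ha).
Proof.
rewrite -(sum_delta_ord F); apply: eq_bigr => i _.
by rewrite -val_eqE.
Qed.

Lemma colsum (R : realType) k n (f : nat -> R) (j : 'I_(k*n)) : (3 <= n)%N ->
  \sum_(i < k*n) f i * (@kCn_rel k n i j)%:R = f (nxt n j) + f (prv n j).
Proof.
move=> n3; have n0 : (0 < n)%N by lia.
rewrite (eq_bigr (fun i : 'I_(k*n) => f i * (val i == nxt n j)%:R
                                  + f i * (val i == prv n j)%:R)).
  by rewrite big_split /= (sum_delta_nat (fun i => f (val i)) (nxt_lt j n0))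
     (sum_delta_nat (fun i => f (val i)) (prv_lt j n0)).
move=> i _; rewrite kCn_nb // -mulrDr; congr (_ * _).
case: (eqVneq (val i) (nxt n j)) => [->|_].
  by rewrite (nxt_prv j n3) -natrD.
by rewrite -natrD.
Qed.

Lemma rowsum (R : realType) k n (i : 'I_(k*n)) : (3 <= n)%N ->
  \sum_j (@kCn_rel k n i j)%:R = 2 :> R.
Proof.
move=> n3; rewrite (eq_bigr (fun j : 'I_(k*n) => (fun _ => 1) (val j) * (@kCn_rel k n j i)%:R)).
  by rewrite (colsum (fun _ => 1)) //.
by move=> j _; rewrite mul1r kCn_sym.
Qed.

Lemma Uentry (R : realType) k n (b cc : R) i j :
  univ_adj_mx (@kCn_rel k n) 1 b cc 0 i j
  = (@kCn_rel k n i j)%:R + b * (i == j)%:R + cc.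
Proof. by rewrite /univ_adj_mx !mxE mul1r mul0r addr0 mulr1 mulr_natr. Qed.

Lemma ker_row (R : realType) k n (cc : R) (f : nat -> R) : (3 <= n)%N ->
  (forall j : 'I_(k*n), f (nxt n j) + f (prv n j) = 2 * cos (th R n) * f j) ->
  (\row_(j < k*n) f j) *m univ_adj_mx (@kCn_rel k n) 1 (- (2 * cos (th R n))) cc 0 = 0.
Proof.
move=> n3 hf; set c0 := cos (th R n).
have S0 : \sum_(i < k*n) f i = 0.
  have h1 : \sum_(j < k*n) \sum_(i < k*n)
      f i * ((@kCn_rel k n i j)%:R - 2 * c0 * (i == j)%:R) = 0.
    apply: big1 => j _; under eq_bigr do rewrite mulrBr.
    rewrite sumrB colsum // hf.
    under eq_bigr do rewrite mulrA.
    by rewrite (sum_delta_ord (fun i : 'I_(k*n) => f i * (2 * c0))) /c0 mulrC subrr.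
  rewrite exchange_big /= in h1.
  have h2 : \sum_(i < k*n) f i * (2 - 2 * c0) = 0.
    rewrite -[X in _ = X]h1; apply: eq_bigr => i _; rewrite -mulr_sumr sumrB rowsum //.
    congr (_ * (_ - _)).
    under eq_bigr do rewrite eq_sym.
    by rewrite (sum_delta_ord (fun _ : 'I_(k*n) => 2 * c0)).
  rewrite -mulr_suml in h2; move/eqP: h2; rewrite mulf_eq0 => /orP[/eqP //|].
  move=> /eqP h; have := th_cos R n3; rewrite -/c0 (_ : c0 = 1) ?eqxx //; lra.
apply/rowP => j; rewrite !mxE.
under eq_bigr do rewrite mxE Uentry !mulrDr.
rewrite !big_split /= colsum // hf -mulr_suml S0 mul0r addr0.
under eq_bigr do rewrite mulrA.
rewrite (sum_delta_ord (fun i : 'I_(k*n) => f i * - (2 * c0))).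
by rewrite -/c0; ring.
Qed.

Lemma ones_ker (R : realType) k n (b : R) : (3 <= n)%N -> (0 < k)%N ->
  (const_mx 1 : 'rV[R]_(k*n)) *m
     univ_adj_mx (@kCn_rel k n) 1 b (- (2 + b) / (k*n)%:R) 0 = 0.
Proof.
move=> n3 k0; apply/rowP => j; rewrite !mxE.
under eq_bigr do rewrite mxE Uentry !mulrDr.
rewrite !big_split /= (colsum (fun _ => 1)) //.
under [X in _ + X + _ = _]eq_bigr do rewrite mul1r.
under [X in _ + X = _]eq_bigr do rewrite mul1r.
rewrite (sum_delta_ord (fun _ => b)) sumr_const card_ord -[X in _ + X = 0]mulr_natr divfK.
  by ring.
by rewrite pnatr_eq0 -lt0n muln_gt0 k0; apply/ltnW/ltnW.
Qed.

Definition cvf (R : realType) n (j : nat) : R := cos ((j %% n)%:R * th R n).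
Definition svf (R : realType) n (j : nat) : R := sin ((j %% n)%:R * th R n).
Definition Bf (R : realType) k n (r j : nat) : R :=
  (r == j %/ n)%N%:R * cvf R n j + (r == k + j %/ n)%N%:R * svf R n j + (r == k + k)%N%:R.
Definition Bmx (R : realType) k n : 'M[R]_((k+k).+1, k*n) :=
  \matrix_(r, j) Bf R k n r j.

Lemma B_ker (R : realType) k n : (3 <= n)%N -> (0 < k)%N ->
  Bmx R k n *m univ_adj_mx (@kCn_rel k n) 1 (- (2 * cos (th R n)))
     (- (2 + - (2 * cos (th R n))) / (k*n)%:R) 0 = 0.
Proof.
move=> n3 k0; have n0 : (0 < n)%N by lia.
apply/row_matrixP => r; rewrite row_mul row0.
case: (eqVneq (val r) (k+k)%N) => hr.
  have -> : row r (Bmx R k n) = const_mx 1.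
    apply/rowP => j; rewrite !mxE /Bf hr eqxx.
    have hj := div_lt j n0.
    rewrite (_ : (k + k == j %/ n)%N = false); last by apply/eqP; lia.
    rewrite (_ : (k + k == k + j %/ n)%N = false); last by apply/eqP; lia.
    by rewrite !mul0r !add0r.
  exact: ones_ker.
have -> : row r (Bmx R k n) = \row_j Bf R k n r j by apply/rowP => j; rewrite !mxE.
apply: ker_row => // j.
have [hn1 _] := nxt_div j n0; have [hp1 _] := prv_div j n0.
rewrite /Bf hn1 hp1 (negbTE hr) /cvf /svf.
have hc := nb_gen (@cosD2pi R) (@cos_add2 R) j n0.
have hs := nb_gen (@sinD2pi R) (@sin_add2 R) j n0.
have hc' : cos ((nxt n j %% n)%:R * th R n)
   = 2 * cos (th R n) * cos ((j %% n)%:R * th R n) - cos ((prv n j %% n)%:R * th R n)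
   by rewrite -hc addrK.
have hs' : sin ((nxt n j %% n)%:R * th R n)
   = 2 * cos (th R n) * sin ((j %% n)%:R * th R n) - sin ((prv n j %% n)%:R * th R n)
   by rewrite -hs addrK.
rewrite hc' hs' (_ : false%:R = 0 :> R) //; ring.
Qed.

Lemma sum_delta_inord (R : realType) M (F : 'I_M.+1 -> R) a : (a <= M)%N ->
  \sum_i F i * (val i == a)%:R = F (inord a).
Proof.
move=> ha; rewrite (sum_delta_nat F (ha : (a < M.+1)%N)); congr F.
by apply: val_inj; rewrite /= inordK.
Qed.

Lemma wB_entry (R : realType) k n (w : 'rV[R]_((k+k).+1)) t p
  (ht : (t < k)%N) (hp : (p < n)%N) :
  (w *m Bmx R k n) 0 (Ordinal (qr_lt ht hp)) =
  w 0 (inord t) * cos (p%:R * th R n) + w 0 (inord (k + t)) * sin (p%:R * th R n)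
  + w 0 (inord (k + k)).
Proof.
rewrite !mxE; under eq_bigr do rewrite mxE /Bf /cvf /svf.
have [-> ->] := divmodE t hp.
rewrite (eq_bigr (fun i : 'I_(k+k).+1 =>
   (w 0 i * cos (p%:R * th R n)) * (val i == t)%:R
 + (w 0 i * sin (p%:R * th R n)) * (val i == k + t)%N%:R
 + w 0 i * (val i == k + k)%N%:R)); last by move=> i _; ring.
rewrite !big_split /=.
rewrite (sum_delta_inord (fun i => w 0 i * cos (p%:R * th R n))); last lia.
rewrite (sum_delta_inord (fun i => w 0 i * sin (p%:R * th R n))); last lia.
by rewrite (sum_delta_inord (fun i => w 0 i)); last lia.
Qed.

Lemma wt0 (R : realType) k n (w : 'rV[R]_((k+k).+1)) t : (3 <= n)%N ->
  w *m Bmx R k n = 0 -> (t < k)%N ->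
  [/\ w 0 (inord t) = 0, w 0 (inord (k + t)) = 0 & w 0 (inord (k + k)) = 0].
Proof.
move=> n3 hw ht; have n0 : (0 < n)%N by lia.
have E : forall p, (p < n)%N -> w 0 (inord t) * cos (p%:R * th R n)
   + w 0 (inord (k + t)) * sin (p%:R * th R n) + w 0 (inord (k + k)) = 0.
  by move=> p hp; rewrite -(wB_entry w ht hp) hw mxE.
set a := w 0 (inord t) in E *; set b := w 0 (inord (k + t)) in E *.
set c := w 0 (inord (k + k)) in E *.
have E0 := E 0%N n0; rewrite mul0r cos0 sin0 in E0.
have E1 := E 1%N (ltnW n3); rewrite mul1r in E1.
have hn : (n.-1 < n)%N by lia.
have E2 := E n.-1 hn.
have hth : n.-1%:R * th R n = - th R n + pi *+ 2.
  have hN : n%:R = n.-1%:R + 1 :> R by rewrite natr1 prednK.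
  rewrite -(nth_eq R n0); set T := th R n; rewrite hN; ring.
rewrite hth cosD2pi sinD2pi cosN sinN in E2.
set c0 := cos (th R n) in E1 E2; set s0 := sin (th R n) in E1 E2.
have hs0 : s0 != 0 by rewrite /s0 gt_eqF // th_sin.
have hc0 : c0 != 1 by rewrite /c0 th_cos.
have ha : a * ((c0 - 1) * 2) = 0.
  have -> : a * ((c0 - 1) * 2) = (a * c0 + b * s0 + c) + (a * c0 + b * - s0 + c)
     - 2 * (a * 1 + b * 0 + c) by ring.
  by rewrite E0 E1 E2; ring.
have a0 : a = 0.
  move/eqP: ha; rewrite mulf_eq0 mulf_eq0 subr_eq0 (negbTE hc0) /= => /orP[/eqP //|].
  by rewrite pnatr_eq0.
have c00 : c = 0 by move: E0; rewrite a0; lra.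
split => //; apply/eqP; move: E1; rewrite a0 c00 mul0r add0r addr0 => /eqP.
by rewrite mulf_eq0 (negbTE hs0) orbF.
Qed.

Lemma B_indep (R : realType) k n (w : 'rV[R]_((k+k).+1)) : (3 <= n)%N -> (0 < k)%N ->
  w *m Bmx R k n = 0 -> w = 0.
Proof.
move=> n3 k0 hw; apply/rowP => r; rewrite [RHS]mxE -[r]inord_val.
have [hr1|hr1] := ltnP r k.
  by case: (wt0 (t:=r) n3 hw hr1).
have [hr2|hr2] := ltnP r (k + k).
  have ht : (r - k < k)%N by lia.
  case: (wt0 (t:=r - k) n3 hw ht) => _ + _.
  by rewrite subnKC.
have -> : val r = (k + k)%N by apply/eqP; rewrite eqn_leq hr2 andbT -ltnS ltn_ord.
by case: (wt0 (t:=0) n3 hw k0).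
Qed.

Lemma upper (R : realType) k n : (3 <= n)%N -> (0 < k)%N ->
  (\rank (univ_adj_mx (@kCn_rel k n) 1 (- (2 * cos (th R n)))
     (- (2 + - (2 * cos (th R n))) / (k*n)%:R) 0) <= k * n - (k + k).+1)%N.
Proof.
move=> n3 k0.
have hf : row_free (Bmx R k n).
  rewrite -kermx_eq0; apply/eqP/row_matrixP => i; rewrite row0.
  by apply: (B_indep n3 k0); rewrite -row_mul mulmx_ker row0.
set U := univ_adj_mx _ _ _ _ _.
have hsub : (Bmx R k n <= kermx U)%MS by rewrite sub_kermx B_ker.
have := mxrankS hsub; rewrite mxrank_ker (eqP hf).
have := rank_leq_row U; lia.
Qed.

Lemma rank_mxsub (R : realType) m1 n1 m2 n2 (f : 'I_m2 -> 'I_m1) (g : 'I_n2 -> 'I_n1)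
  (X : 'M[R]_(m1, n1)) : (\rank (mxsub f g X) <= \rank X)%N.
Proof.
have -> : mxsub f g X = rowsub f 1%:M *m X *m colsub g 1%:M.
  by rewrite mul_rowsub_mx mul1mx -mxsub_mul mulmx1.
apply: leq_trans (mxrankM_maxl _ _) _; exact: mxrankM_maxr.
Qed.

Lemma rank_J (R : realType) N (c : R) : (\rank (- (c *: (const_mx 1%R : 'M[R]_N))) <= 1)%N.
Proof.
have -> : - (c *: (const_mx 1 : 'M[R]_N)) =
   (const_mx (- c) : 'M[R]_(N, 1)) *m (const_mx 1 : 'M[R]_(1, N)).
  by apply/matrixP => i j; rewrite !mxE big_ord1 !mxE; ring.
apply: leq_trans (mxrankM_maxl _ _) _; exact: rank_leq_col.
Qed.

Lemma fv_lt k n (m : 'I_(k*(n-2))) : (3 <= n)%N ->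
  ((m %/ (n-2)) * n + m %% (n-2) < k * n)%N.
Proof.
move=> n3; apply: qr_lt; first by rewrite ltn_divLR ?ltn_ord //; lia.
have : (m %% (n - 2) < n - 2)%N by rewrite ltn_mod; lia.
lia.
Qed.

Lemma gv_lt k n (m : 'I_(k*(n-2))) : (3 <= n)%N ->
  ((m %/ (n-2)) * n + (m %% (n-2)).+1 < k * n)%N.
Proof.
move=> n3; apply: qr_lt; first by rewrite ltn_divLR ?ltn_ord //; lia.
have : (m %% (n - 2) < n - 2)%N by rewrite ltn_mod; lia.
lia.
Qed.

Lemma kCn_sub k n (i j : 'I_(k*n)) q q' s s' : (3 <= n)%N ->
  val i = (q * n + s)%N -> val j = (q' * n + s'.+1)%N ->
  (s < n - 2)%N -> (s' < n - 2)%N ->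
  kCn_rel i j = (q == q') && ((s == s') || (s'.+2 == s)).
Proof.
move=> n3 hi hj hs hs'; rewrite /kCn_rel hi hj.
have hs1 : (s < n)%N by lia.
have hs2 : (s'.+1 < n)%N by lia.
have [-> ->] := divmodE q hs1; have [-> ->] := divmodE q' hs2.
rewrite !modn_small; [by []|lia|lia].
Qed.

Lemma ord_cmp N2 m m' : (m < m')%N -> (m %/ N2 = m' %/ N2)%N -> (m %% N2 < m' %% N2)%N.
Proof.
move=> h e; move: h; rewrite {1}(divn_eq m N2) {1}(divn_eq m' N2) e ltn_add2l.
by [].
Qed.

Lemma fo_go_neq n q q' s s' : (s < n)%N -> (s'.+1 < n)%N ->
  (q = q' -> s <= s')%N -> (q * n + s == q' * n + s'.+1)%N = false.
Proof.
move=> hs hs' hq; rewrite eq_qr //; have [-> ->] := divmodE q hs.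
case: eqP => //= e; apply/eqP; have := hq e; lia.
Qed.

Lemma lower (R : realType) k n (a b c d : R) : (3 <= n)%N -> a != 0 ->
  (k * n - 2 * k - 1 <= \rank (univ_adj_mx (@kCn_rel k n) a b c d))%N.
Proof.
move=> n3 a0.
set e := @kCn_rel k n.
set X := a *: adj_mx R e + b%:M + d *: deg_mx R e.
have hU : univ_adj_mx e a b c d = X + c *: const_mx 1 by rewrite /univ_adj_mx /X addrAC.
have h1 : (\rank X <= \rank (univ_adj_mx e a b c d) + 1)%N.
  have -> : X = univ_adj_mx e a b c d + - (c *: const_mx 1) by rewrite hU addrK.
  apply: leq_trans (mxrank_add _ _) _; rewrite leq_add2l; exact: rank_J.
pose fo := fun m : 'I_(k*(n-2)) => Ordinal (fv_lt m n3).
pose go := fun m : 'I_(k*(n-2)) => Ordinal (gv_lt m n3).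
set S := mxsub fo go X.
have Xoff : forall i j : 'I_(k*n), val i != val j -> X i j = a * (e i j)%:R.
  move=> i j hij; rewrite val_eqE in hij.
  by rewrite !mxE (negbTE hij) mulr0n mul0r mulr0 !addr0.
have hs : forall m : 'I_(k*(n-2)), (m %% (n-2) < n-2)%N by move=> m; rewrite ltn_mod; lia.
have hs1 : forall m : 'I_(k*(n-2)), (m %% (n-2) < n)%N by move=> m; have := hs m; lia.
have hs2 : forall m : 'I_(k*(n-2)), ((m %% (n-2)).+1 < n)%N by move=> m; have := hs m; lia.
have Str : is_trig_mx S.
  apply/is_trig_mxP => i j hij; rewrite mxE Xoff; last first.
    rewrite /= fo_go_neq //.
    by move=> eq; apply: ltnW; apply: ord_cmp.
  rewrite /e (kCn_sub (q:=i %/ (n-2)) (q':=j %/ (n-2)) (s:= i %% (n-2)) (s':=j %% (n-2)) n3) //.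
  case: (eqVneq (i %/ (n-2))%N (j %/ (n-2))%N) => [eq|_] /=; last by rewrite mulr0.
  have lt := ord_cmp hij eq.
  rewrite (_ : (_ || _) = false) ?mulr0 //.
  by apply/negbTE; apply/norP; split; apply/eqP; lia.
have Sdiag : forall i, S i i = a.
  move=> i; rewrite mxE Xoff; last by rewrite /= fo_go_neq.
  rewrite /e (kCn_sub (q:=i %/ (n-2)) (q':=i %/ (n-2)) (s:= i %% (n-2)) (s':=i %% (n-2)) n3) //.
  by rewrite !eqxx /= mulr1.
have hdet : \det S != 0.
  rewrite det_trig // (eq_bigr (fun _ => a)); last by move=> i _; rewrite Sdiag.
  by rewrite prodr_const expf_neq0.
have hrS : \rank S = (k * (n - 2))%N by apply: mxrank_unit; rewrite unitmxE unitfE.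
have := rank_mxsub fo go X; rewrite -/S hrS mulnBr => h2.
lia.
Qed.

Theorem corollary12 (R : realType) (n k : nat) :
  (3 <= n)%N -> (1 <= k)%N ->
  mur_is R (@kCn_rel k n) (k * n - 2 * k - 1).
Proof.
move=> n3 k1; split.
  exists 1, (- (2 * cos (th R n))), (- (2 + - (2 * cos (th R n))) / (k*n)%:R), 0.
  split; first exact: oner_neq0.
  have hu := upper R n3 k1.
  have hl := @lower R k n 1 (- (2 * cos (th R n))) (- (2 + - (2 * cos (th R n))) / (k*n)%:R) 0 n3 (oner_neq0 R).
  apply/eqP; rewrite eqn_leq hl andbT; lia.
by move=> a b c d a0; exact: lower.
Qed.
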